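(* For every pure context $F$, term $t$ and variable $x\notin\mathrm{fv}(F)$, we have $\langle (\lambda x.\langle F[x]\rangle)\,t\rangle \sim \langle F[t]\rangle$.
   Context: The calculus $\lambda_{\mathcal S}$. Terms: $t ::= x \mid \lambda x.t \mid t\,t \mid \mathcal{S}k.t \mid \langle t\rangle$ (shift and reset); values: $v ::= \lambda x.t \mid x$. $\lambda x.t$ binds $x$, $\mathcal{S}k.t$ binds $k$; terms up to $\alpha$-conversion; $\mathrm{fv}$ free variables; capture-avoiding substitution $t\{v/x\}$. Pure contexts $F ::= [\,] \mid v\,F \mid F\,t$; evaluation contexts $E ::= [\,] \mid v\,E \mid E\,t \mid \langle E\rangle$. Reduction: $E[(\lambda x.t)\,v] \to E[t\{v/x\}]$; $E[\langle F[\mathcal{S}k.t]\rangle] \to E[\langle t\{\lambda x.\langle F[x]\rangle/k\}\rangle]$ ($x\notin\mathrm{fv}(F)$); $E[\langle v\rangle]\to E[v]$. $t\Downarrow t'$ iff $t\to^*t'$ and $t'$ irreducible. Normal forms: values, control stuck terms $F[\mathcal{S}k.t]$, open stuck terms $E[x\,v]$. Fresh: not free in the terms/contexts considered. Normal form bisimilarity $\sim$: for a relation $\mathcal R$ on terms, $E_0\mathrel{\mathcal R}E_1$ iff either $E_0=E_0'[\langle F_0\rangle]$, $E_1=E_1'[\langle F_1\rangle]$ ($F_i$ pure) with $E_0'[x]\mathrel{\mathcal R}E_1'[x]$ and $\langle F_0[x]\rangle\mathrel{\mathcal R}\langle F_1[x]\rangle$ ($x$ fresh), or $E_0=F_0$,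 $E_1=F_1$ pure with $F_0[x]\mathrel{\mathcal R}F_1[x]$ ($x$ fresh). $v\mathbin{@}y$ is $x\,y$ if $v=x$, $t\{y/x\}$ if $v=\lambda x.t$. $\mathcal R^{\mathrm{nf}}$ on normal forms: $v_0\mathrel{\mathcal R^{\mathrm{nf}}}v_1$ if $v_0\mathbin{@}x\mathrel{\mathcal R}v_1\mathbin{@}x$ ($x$ fresh); $F_0[\mathcal{S}k.t_0]\mathrel{\mathcal R^{\mathrm{nf}}}F_1[\mathcal{S}k.t_1]$ if $F_0\mathrel{\mathcal R}F_1$ and $\langle t_0\rangle\mathrel{\mathcal R}\langle t_1\rangle$; $E_0[x\,v_0]\mathrel{\mathcal R^{\mathrm{nf}}}E_1[x\,v_1]$ if $E_0\mathrel{\mathcal R}E_1$ and $v_0\mathrel{\mathcal R^{\mathrm{nf}}}v_1$. $\mathcal R$ is a normal form simulation if $t_0\mathrel{\mathcal R}t_1$ and $t_0\Downarrow t_0'$ imply $t_1\Downarrow t_1'$ with $t_0'\mathrel{\mathcal R^{\mathrm{nf}}}t_1'$; a bisimulation if $\mathcal R$ and $\mathcal R^{-1}$ are simulations; $\sim$ is the largest normal form bisimulation. *)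

(* Defs.v *)
(* The calculus lambda_S (shift/reset) in locally nameless
   representation: bound variables are de Bruijn indices (so alpha-equivalent
   terms are syntactically equal), free variables are names (nat). *)
From Stdlib Require Import List Arith.
Import ListNotations.

Inductive term : Type :=
| BVar  : nat -> term
| FVar  : nat -> term
| Lam   : term -> term
| App   : term -> term -> term
| Shift : term -> term           (* S k. t (binds index 0) *)
| Reset : term -> term.

Definition is_value (t : term) : Prop :=
  match t with Lam _ | FVar _ => True | _ => False end.

Fixpoint fv (t : term) : list nat :=
  match t with
  | BVar _ => []
  | FVar x => [x]
  | Lam b => fv b
  | App a b => fv a ++ fv b
  | Shift b => fv b
  | Reset b => fv b
  end.

Fixpoint open_rec (k : nat) (u : term) (t : term) : term :=
  match t with
  | BVar n => if Nat.eqb n k then u else BVar n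
  | FVar x => FVar x
  | Lam b => Lam (open_rec (S k) u b)
  | App a b => App (open_rec k u a) (open_rec k u b)
  | Shift b => Shift (open_rec (S k) u b)
  | Reset b => Reset (open_rec k u b)
  end.
Definition open (b u : term) : term := open_rec 0 u b.

Fixpoint close_rec (k : nat) (x : nat) (t : term) : term :=
  match t with
  | BVar n => BVar n
  | FVar y => if Nat.eqb y x then BVar k else FVar y
  | Lam b => Lam (close_rec (S k) x b)
  | App a b => App (close_rec k x a) (close_rec k x b)
  | Shift b => Shift (close_rec (S k) x b)
  | Reset b => Reset (close_rec k x b)
  end.
Definition close (x : nat) (t : term) : term := close_rec 0 x t.

(* local closure: the representations of genuine (alpha-classes of) terms *)
Fixpoint lc_at (k : nat) (t : term) : Prop :=
  match t with
  | BVar n => n < k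
  | FVar _ => True
  | Lam b => lc_at (S k) b
  | App a b => lc_at k a /\ lc_at k b
  | Shift b => lc_at (S k) b
  | Reset b => lc_at k b
  end.
Definition lc (t : term) : Prop := lc_at 0 t.

Inductive ectx : Type :=
| EHole : ectx
| EArgR : term -> ectx -> ectx
| EFunL : ectx -> term -> ectx
| EReset : ectx -> ectx.

Fixpoint plug (E : ectx) (u : term) : term :=
  match E with
  | EHole => u
  | EArgR v E' => App v (plug E' u)
  | EFunL E' t => App (plug E' u) t
  | EReset E' => Reset (plug E' u)
  end.

Fixpoint cplug (E : ectx) (E2 : ectx) : ectx :=
  match E with
  | EHole => E2
  | EArgR v E' => EArgR v (cplug E' E2)
  | EFunL E' t => EFunL (cplug E' E2) t
  | EReset E' => EReset (cplug E' E2)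
  end.

Fixpoint ectx_ok (E : ectx) : Prop :=
  match E with
  | EHole => True
  | EArgR v E' => is_value v /\ ectx_ok E'
  | EFunL E' _ => ectx_ok E'
  | EReset E' => ectx_ok E'
  end.

Fixpoint pure (E : ectx) : Prop :=
  match E with
  | EHole => True
  | EArgR v E' => is_value v /\ pure E'
  | EFunL E' _ => pure E'
  | EReset _ => False
  end.

Fixpoint fv_ctx (E : ectx) : list nat :=
  match E with
  | EHole => []
  | EArgR v E' => fv v ++ fv_ctx E'
  | EFunL E' t => fv_ctx E' ++ fv t
  | EReset E' => fv_ctx E'
  end.

Fixpoint lc_ctx (E : ectx) : Prop :=
  match E with
  | EHole => True
  | EArgR v E' => lc v /\ lc_ctx E'
  | EFunL E' t => lc_ctx E' /\ lc t
  | EReset E' => lc_ctx E'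
  end.

Inductive step : term -> term -> Prop :=
| step_beta : forall E b v,
    ectx_ok E -> is_value v ->
    step (plug E (App (Lam b) v)) (plug E (open b v))
| step_shift : forall E F b x,
    ectx_ok E -> pure F -> ~ In x (fv_ctx F) ->
    step (plug E (Reset (plug F (Shift b))))
         (plug E (Reset (open b (Lam (close x (Reset (plug F (FVar x))))))))
| step_reset : forall E v,
    ectx_ok E -> is_value v ->
    step (plug E (Reset v)) (plug E v).

Inductive star : term -> term -> Prop :=
| star_refl : forall t, star t t
| star_step : forall t t' t'', step t t' -> star t' t'' -> star t t''.

Definition irreducible (t : term) : Prop := ~ exists t', step t t'.

Definition evals (t t' : term) : Prop := star t t' /\ irreducible t'.

Definition rel := term -> term -> Prop.

Definition ctx_rel (R : rel) (E0 E1 : ectx) : Prop :=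
  (exists E0' F0 E1' F1,
      pure F0 /\ pure F1 /\
      E0 = cplug E0' (EReset F0) /\ E1 = cplug E1' (EReset F1) /\
      exists x, ~ In x (fv_ctx E0) /\ ~ In x (fv_ctx E1) /\
        R (plug E0' (FVar x)) (plug E1' (FVar x)) /\
        R (Reset (plug F0 (FVar x))) (Reset (plug F1 (FVar x))))
  \/
  (pure E0 /\ pure E1 /\
   exists x, ~ In x (fv_ctx E0) /\ ~ In x (fv_ctx E1) /\
     R (plug E0 (FVar x)) (plug E1 (FVar x))).

Definition vapp (v : term) (y : nat) : term :=
  match v with
  | FVar x => App (FVar x) (FVar y)
  | Lam b => open b (FVar y)
  | _ => App v (FVar y)  (* not used on values *)
  end.

Definition value_rel (R : rel) (v0 v1 : term) : Prop :=
  is_value v0 /\ is_value v1 /\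
  exists y, ~ In y (fv v0) /\ ~ In y (fv v1) /\ R (vapp v0 y) (vapp v1 y).

Definition nf_rel (R : rel) (t0 t1 : term) : Prop :=
  value_rel R t0 t1
  \/ (exists F0 F1 b0 b1,
        pure F0 /\ pure F1 /\
        t0 = plug F0 (Shift b0) /\ t1 = plug F1 (Shift b1) /\
        ctx_rel R F0 F1 /\
        exists k, ~ In k (fv b0) /\ ~ In k (fv b1) /\
          R (Reset (open b0 (FVar k))) (Reset (open b1 (FVar k))))
  \/ (exists E0 E1 x v0 v1,
        ectx_ok E0 /\ ectx_ok E1 /\
        t0 = plug E0 (App (FVar x) v0) /\ t1 = plug E1 (App (FVar x) v1) /\
        ctx_rel R E0 E1 /\ value_rel R v0 v1).

Definition nf_simulation (R : rel) : Prop :=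
  forall t0 t1 t0', R t0 t1 -> evals t0 t0' ->
    exists t1', evals t1 t1' /\ nf_rel R t0' t1'.

Definition nf_bisimulation (R : rel) : Prop :=
  nf_simulation R /\ nf_simulation (fun t0 t1 => R t1 t0).

(* normal form bisimilarity: the largest normal form bisimulation
   (= the union of all normal form bisimulations) *)
Definition nf_bisim (t0 t1 : term) : Prop :=
  exists R, nf_bisimulation R /\ R t0 t1.

(* Main.v *)
Require Import Defs.
From Stdlib Require Import List Arith Lia Classical.
Import ListNotations.

Lemma fresh_var (l : list nat) : exists y, ~ In y l.
Proof.
  assert (H : forall y, In y l -> y <= fold_right max 0 l).
  { induction l; simpl; intros y Hy; [contradiction|].
    destruct Hy as [H|H]; subst; try lia.
    specialize (IHl y H); lia. }
  exists (S (fold_right max 0 l)). intro Hin. apply H in Hin. lia.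
Qed.

Lemma plug_cplug E E2 u : plug (cplug E E2) u = plug E (plug E2 u).
Proof. induction E; simpl; congruence. Qed.

Lemma cplug_assoc E1 E2 E3 : cplug (cplug E1 E2) E3 = cplug E1 (cplug E2 E3).
Proof. induction E1; simpl; congruence. Qed.

Lemma fv_ctx_cplug E E2 : fv_ctx (cplug E E2) = fv_ctx E ++ fv_ctx E2 \/ True.
Proof. auto. Qed.

Lemma close_fresh w : forall k x, ~ In x (fv w) -> close_rec k x w = w.
Proof.
  induction w; simpl; intros k x Hx; auto.
  - destruct (Nat.eqb_spec n x); subst; auto. exfalso; auto.
  - rewrite IHw; auto.
  - rewrite IHw1, IHw2; auto; intro; apply Hx; apply in_or_app; auto.
  - rewrite IHw; auto.
  - rewrite IHw; auto.
Qed.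

Lemma close_plug E : forall k x u, ~ In x (fv_ctx E) ->
  close_rec k x (plug E u) = plug E (close_rec k x u).
Proof.
  induction E; simpl; intros k x u Hx; auto.
  - rewrite (close_fresh t), IHE; auto; intro; apply Hx; apply in_or_app; auto.
  - rewrite (close_fresh t), IHE; auto; intro; apply Hx; apply in_or_app; auto.
  - rewrite IHE; auto.
Qed.

Lemma close_plug_var E k x : ~ In x (fv_ctx E) ->
  close_rec k x (plug E (FVar x)) = plug E (BVar k).
Proof. intros H. rewrite close_plug; auto. simpl. rewrite Nat.eqb_refl. auto. Qed.

Lemma lc_mono w : forall n m, lc_at n w -> n <= m -> lc_at m w.
Proof.
  induction w; simpl; intros n0 m H Hle; try tauto; try lia.
  - eapply IHw; eauto; lia.
  - destruct H; split; eauto.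
  - eapply IHw; eauto; lia.
  - eauto.
Qed.

Lemma open_lc w : forall n k u, lc_at n w -> n <= k -> open_rec k u w = w.
Proof.
  induction w; simpl; intros n0 k u H Hle; auto.
  - destruct (Nat.eqb_spec n k); subst; auto; lia.
  - erewrite IHw; eauto; lia.
  - destruct H; erewrite IHw1, IHw2; eauto.
  - erewrite IHw; eauto; lia.
  - erewrite IHw; eauto.
Qed.

Lemma open_plug_lc G : forall k u w, lc_ctx G ->
  open_rec k u (plug G w) = plug G (open_rec k u w).
Proof.
  induction G; simpl; intros k u w H; auto.
  - destruct H. rewrite (open_lc t 0); auto; try lia. rewrite IHG; auto.
  - destruct H. rewrite (open_lc t 0); auto; try lia. rewrite IHG; auto.
  - rewrite IHG; auto.
Qed.

Lemma lc_open b : forall n v, lc_at (S n) b -> lc_at n v -> lc_at n (open_rec n v b).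
Proof.
  induction b; simpl; intros n0 v H Hv; auto.
  - destruct (Nat.eqb_spec n n0); subst; auto. simpl; lia.
  - apply IHb; auto. eapply lc_mono; eauto.
  - destruct H; split; auto.
  - apply IHb; auto. eapply lc_mono; eauto.
Qed.

Lemma lc_plug_inv E : forall u, lc (plug E u) -> lc_ctx E /\ lc u.
Proof.
  induction E; simpl; intros u H; auto.
  - destruct H as [H1 H2]; apply IHE in H2; tauto.
  - destruct H as [H1 H2]; apply IHE in H1; tauto.
Qed.

Lemma lc_plug E : forall n u, lc_ctx E -> lc_at n u -> lc_at n (plug E u).
Proof.
  induction E; simpl; intros n u H Hu; auto.
  - destruct H; split; auto. eapply lc_mono; eauto; lia.
  - destruct H; split; auto. eapply lc_mono; eauto; lia.
Qed.

Lemma lc_ctx_cplug E E2 : lc_ctx (cplug E E2) <-> lc_ctx E /\ lc_ctx E2.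
Proof. induction E; simpl; tauto. Qed.

Lemma pure_cplug E E2 : pure E -> pure E2 -> pure (cplug E E2).
Proof. induction E; simpl; tauto. Qed.

Lemma pure_ok E : pure E -> ectx_ok E.
Proof. induction E; simpl; tauto. Qed.

Lemma ok_cplug E E2 : ectx_ok E -> ectx_ok E2 -> ectx_ok (cplug E E2).
Proof. induction E; simpl; tauto. Qed.

Lemma fv_ctx_cplug' E E2 x : ~ In x (fv_ctx (cplug E E2)) -> ~ In x (fv_ctx E2).
Proof. induction E; simpl; auto; intros H Hin; apply IHE; auto; intro; apply H; apply in_or_app; auto. Qed.

Inductive sstep : term -> term -> Prop :=
| s_beta b v : is_value v -> sstep (App (Lam b) v) (open b v)
| s_reset v : is_value v -> sstep (Reset v) v
| s_shift F b x : pure F -> ~ In x (fv_ctx F) ->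
    sstep (Reset (plug F (Shift b)))
          (Reset (open b (Lam (close x (Reset (plug F (FVar x)))))))
| s_appl s s' u : sstep s s' -> sstep (App s u) (App s' u)
| s_appr v s s' : is_value v -> sstep s s' -> sstep (App v s) (App v s')
| s_resetc s s' : sstep s s' -> sstep (Reset s) (Reset s').

Lemma sstep_ctx E : forall a b, ectx_ok E -> sstep a b -> sstep (plug E a) (plug E b).
Proof.
  induction E; simpl; intros a b HE H; auto.
  - destruct HE; apply s_appr; auto.
  - apply s_appl; auto.
  - apply s_resetc; auto.
Qed.

Lemma step_wrap E' a b : ectx_ok E' -> step a b -> step (plug E' a) (plug E' b).
Proof.
  intros HE H; destruct H.
  - rewrite <- !plug_cplug. apply step_beta; auto. apply ok_cplug; auto.
  - rewrite <- !plug_cplug. apply step_shift; auto. apply ok_cplug; auto.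
  - rewrite <- !plug_cplug. apply step_reset; auto. apply ok_cplug; auto.
Qed.

Lemma step_sstep a b : step a b <-> sstep a b.
Proof.
  split.
  - intros H; destruct H.
    + apply sstep_ctx; auto. constructor; auto.
    + apply sstep_ctx; auto. constructor; auto.
    + apply sstep_ctx; auto. constructor; auto.
  - intros H; induction H.
    + exact (step_beta EHole b v I H).
    + exact (step_reset EHole v I H).
    + exact (step_shift EHole F b x I H H0).
    + apply (step_wrap (EFunL EHole u)); simpl; auto.
    + apply (step_wrap (EArgR v EHole)); simpl; auto.
    + apply (step_wrap (EReset EHole)); simpl; auto.
Qed.

Inductive sstar : term -> term -> Prop :=
| ss_refl t : sstar t t
| ss_step t t' t'' : sstep t t' -> sstar t' t'' -> sstar t t''.

Lemma star_sstar a b : star a b <-> sstar a b.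
Proof.
  split; intros H; induction H; econstructor; eauto; apply step_sstep; auto.
Qed.

Lemma sstar_trans a b c : sstar a b -> sstar b c -> sstar a c.
Proof. intros H; induction H; intros; eauto using ss_step. Qed.

Definition sirred t := ~ exists t', sstep t t'.

Lemma irred_sirred t : irreducible t <-> sirred t.
Proof.
  unfold irreducible, sirred; split; intros H [t' Ht]; apply H; exists t';
  apply step_sstep; auto.
Qed.

Lemma val_nostep v w : is_value v -> ~ sstep v w.
Proof. destruct v; simpl; intros H Hs; inversion Hs; tauto. Qed.

Lemma plug_shift_notval F b : is_value (plug F (Shift b)) -> False.
Proof. destruct F; simpl; auto. Qed.

Lemma shift_nostep F b w : pure F -> ~ sstep (plug F (Shift b)) w.
Proof.
  revert w; induction F; simpl; intros w HF Hs.
  - inversion Hs.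
  - destruct HF. inversion Hs; subst.
    + eapply plug_shift_notval; eauto.
    + eapply val_nostep; eauto.
    + eapply IHF; eauto.
  - inversion Hs; subst.
    + destruct F; discriminate.
    + eapply IHF; eauto.
    + eapply plug_shift_notval; eauto.
  - contradiction.
Qed.

Lemma plug_shift_inj F : forall F' b b', pure F -> pure F' ->
  plug F (Shift b) = plug F' (Shift b') -> F = F' /\ b = b'.
Proof.
  induction F; intros F' b b' HF HF' Heq; destruct F'; simpl in *; try discriminate;
    try contradiction.
  - injection Heq; auto.
  - destruct HF, HF'. injection Heq; intros. subst.
    destruct (IHF F' b b') as [-> ->]; auto.
  - destruct HF. injection Heq; intros; subst. exfalso; eapply plug_shift_notval; eauto.
  - destruct HF'. injection Heq; intros; subst. exfalso; eapply plug_shift_notval; eauto.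
  - injection Heq; intros; subst. destruct (IHF F' b b') as [-> ->]; auto.
Qed.

Ltac nostep := match goal with
 | H : sstep (FVar _) _ |- _ => inversion H
 | H : sstep (Lam _) _ |- _ => inversion H
 | H : is_value ?v, H2 : sstep ?v _ |- _ => exfalso; eapply val_nostep; [exact H| exact H2]
 end.

Lemma plug_open_notval E x v : is_value (plug E (App (FVar x) v)) -> False.
Proof. destruct E; simpl; auto. Qed.

Lemma open_shift_neq E : forall F x v b, ectx_ok E -> pure F -> is_value v ->
  plug E (App (FVar x) v) = plug F (Shift b) -> False.
Proof.
  induction E; intros F x v b HE HF Hv H; destruct F; simpl in *; try discriminate;
    try contradiction; injection H; intros; subst;
    repeat match goal with H: _ /\ _ |- _ => destruct H end;
    first [ solve [eapply plug_shift_notval; eauto] | solve [eapply plug_open_notval; eauto]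
          | solve [eapply IHE; eauto] | (destruct F; discriminate) ].
Qed.

Lemma open_stuck_nostep E : forall x v w, ectx_ok E -> is_value v ->
  ~ sstep (plug E (App (FVar x) v)) w.
Proof.
  induction E; simpl; intros x v w HE Hv Hs.
  - inversion Hs; subst; nostep.
  - destruct HE. inversion Hs; subst; try nostep.
    + eapply plug_open_notval; eauto.
    + eapply (IHE x v); eauto.
  - inversion Hs; subst.
    + destruct E; discriminate.
    + eapply (IHE x v); eauto.
    + eapply plug_open_notval; eauto.
  - inversion Hs; subst.
    + eapply plug_open_notval; eauto.
    + eapply open_shift_neq; eauto.
    + eapply (IHE x v); eauto.
Qed.


Lemma close_cont F x : ~ In x (fv_ctx F) ->
  close x (Reset (plug F (FVar x))) = Reset (plug F (BVar 0)).
Proof. intros H. unfold close; simpl. rewrite close_plug_var; auto. Qed.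

Lemma sstep_det t a : sstep t a -> forall b, sstep t b -> a = b.
Proof.
  intros H; induction H; intros c Hc; inversion Hc; subst; auto;
  try solve [exfalso; nostep];
  try solve [f_equal; auto];
  try solve [exfalso; eapply plug_shift_notval; eauto];
  try solve [exfalso; eapply shift_nostep; eauto].
  destruct (plug_shift_inj F0 F b0 b) as [-> ->]; auto.
  rewrite !close_cont; auto.
Qed.

Lemma lc_sstep t t' : sstep t t' -> lc t -> lc t'.
Proof.
  unfold lc; intros H; induction H; simpl; intros Hl.
  - destruct Hl. apply lc_open; auto.
  - auto.
  - apply lc_plug_inv in Hl. destruct Hl as [HF Hb]. simpl in Hb.
    apply lc_open; auto. rewrite close_cont; auto. simpl.
    apply lc_plug; auto. simpl; lia.
  - destruct Hl; split; auto.
  - destruct Hl; split; auto.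
  - auto.
Qed.

Definition dl (t : term) : Prop :=
  match t with Lam _ | FVar _ | Reset _ => True | _ => False end.

Inductive ad : term -> term -> Prop :=
| ad_bvar n : ad (BVar n) (BVar n)
| ad_fvar x : ad (FVar x) (FVar x)
| ad_lam a b : ad a b -> ad (Lam a) (Lam b)
| ad_app a b c d : ad a c -> ad b d -> ad (App a b) (App c d)
| ad_shift a b : ad a b -> ad (Shift a) (Shift b)
| ad_reset a b : ad a b -> ad (Reset a) (Reset b)
| ad_r1 G s0 s1 : pure G -> lc_ctx G -> ad s0 s1 ->
    ad (Reset (App (Lam (Reset (plug G (BVar 0)))) s0)) (Reset (plug G s1))
| ad_r2 s0 s1 : ad s0 s1 -> dl s1 -> ad (Reset s0) s1.

Lemma ad_refl t : ad t t.
Proof. induction t; constructor; auto. Qed.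

Inductive actx : ectx -> ectx -> Prop :=
| ac_hole : actx EHole EHole
| ac_argr v0 v1 E0 E1 : ad v0 v1 -> actx E0 E1 -> actx (EArgR v0 E0) (EArgR v1 E1)
| ac_funl E0 E1 u0 u1 : actx E0 E1 -> ad u0 u1 -> actx (EFunL E0 u0) (EFunL E1 u1)
| ac_reset E0 E1 : actx E0 E1 -> actx (EReset E0) (EReset E1)
| ac_r1 G E0 E1 : pure G -> lc_ctx G -> actx E0 E1 ->
    actx (EReset (EArgR (Lam (Reset (plug G (BVar 0)))) E0)) (EReset (cplug G E1))
| ac_r2 E0 E1 : actx E0 (EReset E1) -> actx (EReset E0) (EReset E1).

Lemma actx_refl E : actx E E.
Proof. induction E; constructor; auto using ad_refl. Qed.

Lemma actx_plug E0 E1 u0 u1 : actx E0 E1 -> ad u0 u1 -> ad (plug E0 u0) (plug E1 u1).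
Proof.
  intros H Hu; induction H; simpl; auto; try (constructor; auto; fail).
  - rewrite plug_cplug. apply ad_r1; auto.
  - apply ad_r2; auto. exact I.
Qed.

Lemma value_ad v0 v1 : ad v0 v1 -> is_value v0 -> is_value v1.
Proof. intros H Hv; inversion H; subst; simpl in *; tauto. Qed.

Lemma actx_pure E0 E1 : actx E0 E1 -> pure E0 -> pure E1.
Proof. intros H; induction H; simpl; try tauto. intros [Hv Hp]; split; eauto using value_ad. Qed.

Lemma value_ad_r v0 v1 : ad v0 v1 -> is_value v1 -> is_value v0 \/ exists s, v0 = Reset s.
Proof. intros H Hv; inversion H; subst; simpl in *; try tauto; eauto. Qed.

Lemma actx_ok E0 E1 : actx E0 E1 -> ectx_ok E0 -> ectx_ok E1.
Proof.
  intros H; induction H; simpl; try tauto.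
  - intros [Hv Ho]; split; eauto using value_ad.
  - intros [_ Ho]. apply ok_cplug; auto. apply pure_ok; auto.
Qed.

Lemma ad_open b0 b1 : ad b0 b1 -> forall k v0 v1, ad v0 v1 -> is_value v1 ->
  ad (open_rec k v0 b0) (open_rec k v1 b1).
Proof.
  intros H; induction H; simpl; intros k v0 v1 Hv Hv1.
  - destruct (Nat.eqb n k); auto. constructor.
  - constructor.
  - constructor; auto.
  - constructor; auto.
  - constructor; auto.
  - constructor; auto.
  - rewrite !open_plug_lc; auto. simpl.
    apply ad_r1; auto.
  - apply ad_r2; auto. destruct s1; simpl in H0 |- *; try contradiction; auto.
Qed.

Fixpoint size (t : term) : nat :=
  match t with
  | BVar _ => 1 | FVar _ => 1
  | Lam b => S (size b) | App a b => S (size a + size b)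
  | Shift b => S (size b) | Reset b => S (size b)
  end.

Fixpoint csize (E : ectx) : nat :=
  match E with
  | EHole => 0
  | EArgR v E => S (size v + csize E)
  | EFunL E t => S (csize E + size t)
  | EReset E => S (csize E)
  end.

Lemma size_plug E u : size (plug E u) = csize E + size u.
Proof. induction E; simpl; lia. Qed.

Lemma inv_shift F : forall b t1, pure F -> ad (plug F (Shift b)) t1 ->
  exists F1 b1, pure F1 /\ t1 = plug F1 (Shift b1) /\ actx F F1 /\ ad b b1.
Proof.
  induction F; simpl; intros b t1 HF H; try contradiction.
  - inversion H; subst. exists EHole, b0; simpl; repeat split; auto. constructor.
  - destruct HF as [Hv HF]. inversion H; subst.
    destruct (IHF b d HF H4) as (F1 & b1 & HF1 & -> & Ha & Hb).
    exists (EArgR c F1), b1; simpl; repeat split; eauto using value_ad. constructor; auto.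
  - inversion H; subst.
    destruct (IHF b c HF H2) as (F1 & b1 & HF1 & -> & Ha & Hb).
    exists (EFunL F1 d), b1; simpl; repeat split; auto. constructor; auto.
Qed.

Lemma inv_open E : forall x v t1, ectx_ok E -> ad (plug E (App (FVar x) v)) t1 ->
  exists E1 v1, t1 = plug E1 (App (FVar x) v1) /\ actx E E1 /\ ad v v1.
Proof.
  induction E; simpl; intros x v t1 HE H.
  - inversion H; subst. inversion H2; subst. exists EHole, d; repeat split; auto. constructor.
  - destruct HE as [Hv HE]. inversion H; subst.
    destruct (IHE x v d HE H4) as (E1 & v1 & -> & Ha & Hb).
    exists (EArgR c E1), v1; repeat split; auto. constructor; auto.
  - inversion H; subst.
    destruct (IHE x v c HE H2) as (E1 & v1 & -> & Ha & Hb).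
    exists (EFunL E1 d), v1; repeat split; auto. constructor; auto.
  - inversion H; subst.
    + destruct (IHE x v b HE H1) as (E1 & v1 & -> & Ha & Hb).
      exists (EReset E1), v1; repeat split; auto. constructor; auto.
    +
      assert (Had : ad (plug E (App (FVar x) v)) (App (Lam (Reset (plug G (BVar 0)))) s1)).
      { rewrite <- H0. constructor; auto using ad_refl. }
      destruct (IHE x v _ HE Had) as (E1 & v1 & Heq & Ha & Hb).
      destruct E; simpl in H0; try discriminate.
      * injection H0; intros; subst.
        inversion Ha; subst. simpl in Heq. injection Heq; intros; subst.
        match goal with H: actx E ?E' |- _ => exists (EReset (cplug G E')), v1 end;
        repeat split; auto.
        -- simpl. rewrite plug_cplug. auto.
        -- apply ac_r1; auto.
      * injection H0; intros. destruct E; discriminate.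
    + destruct (IHE x v t1 HE H1) as (E1 & v1 & -> & Ha & Hb).
      destruct E1; simpl in H2; try contradiction.
      exists (EReset E1), v1; repeat split; auto. apply ac_r2; auto.
Qed.

Lemma dl_step t t' : dl t -> sstep t t' -> dl t'.
Proof.
  intros H Hs; destruct t; simpl in H; try contradiction; inversion Hs; subst; simpl; auto.
  destruct t'; simpl in *; auto.
Qed.

Lemma val_dl v : is_value v -> dl v.
Proof. destruct v; simpl; auto. Qed.

Lemma sim_step t0 t0' : sstep t0 t0' -> forall t1, ad t0 t1 ->
  (exists t1', sstep t1 t1' /\ ad t0' t1') \/ (ad t0' t1 /\ size t0' < size t0).
Proof.
  intros H; induction H; intros t1 Ht.
  -
    inversion Ht; subst. inversion H2; subst.
    left. exists (open b0 d). split.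
    + constructor. eapply value_ad; eauto.
    + apply ad_open; auto. eapply value_ad; eauto.
  -
    inversion Ht; subst.
    + left. exists b. split; auto. constructor. eapply value_ad; eauto.
    + exfalso; match goal with H: is_value _ |- _ => simpl in H; contradiction end.
    + right. split; auto.
  -
    inversion Ht; subst.
    + destruct (inv_shift F b b0 H H2) as (F1 & b1 & HF1 & -> & Ha & Hb).
      destruct (fresh_var (fv_ctx F1)) as [y Hy].
      left. eexists. split.
      * apply (s_shift F1 b1 y); auto.
      * rewrite !close_cont; auto. constructor. apply ad_open; simpl; auto.
        constructor. constructor. apply actx_plug; auto. constructor.
    + match goal with Hq : App (Lam _) _ = plug F (Shift b) |- _ => rename Hq into Heq end.
      destruct F as [|t F|F u|F]; simpl in Heq; try discriminate.
      * injection Heq; intros; subst. destruct H as [_ HF].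
        match goal with H5 : ad (plug F (Shift b)) ?s1 |- _ =>
          destruct (inv_shift F b s1 HF H5) as (F1 & b1 & HF1 & -> & Ha & Hb) end.
        destruct (fresh_var (fv_ctx (cplug G F1))) as [y Hy].
        left. eexists. split.
        -- rewrite <- plug_cplug. apply (s_shift (cplug G F1) b1 y); auto.
           apply pure_cplug; auto.
        -- rewrite !close_cont; auto. rewrite plug_cplug. simpl.
           constructor. apply ad_open; simpl; auto.
           constructor. apply ad_r1; auto. apply actx_plug; auto. constructor.
      * injection Heq; intros; subst. destruct F; discriminate.
    + destruct (inv_shift F b t1 H H2) as (F1 & b1 & HF1 & -> & Ha & Hb).
      destruct F1; simpl in H3; contradiction.
  -
    inversion Ht; subst.
    match goal with Hc : ad s ?c |- _ => destruct (IHsstep c Hc) as [(c' & Hs & Ha) | (Ha & Hsz)] end.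
    + left. exists (App c' d). split; constructor; auto.
    + right. split; [constructor; auto | simpl; lia].
  -
    inversion Ht; subst.
    match goal with Hc : ad s ?d |- _ => destruct (IHsstep d Hc) as [(d' & Hs & Ha) | (Ha & Hsz)] end.
    + left. exists (App c d'). split; constructor; auto. eapply value_ad; eauto.
    + right. split; [constructor; auto | simpl; lia].
  -
    inversion Ht; subst.
    + match goal with Hc : ad s ?b |- _ => destruct (IHsstep b Hc) as [(b' & Hs & Ha) | (Ha & Hsz)] end.
      * left. exists (Reset b'). split; constructor; auto.
      * right. split; [constructor; auto | simpl; lia].
    +
      inversion H; subst.
      *
        right. split.
        -- unfold open. simpl. rewrite open_plug_lc; auto. simpl.
           apply ad_r2; simpl; auto. constructor. apply actx_plug; auto using actx_refl.
        -- unfold open; simpl. rewrite open_plug_lc; auto. simpl.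
           rewrite !size_plug. simpl. lia.
      * match goal with Hc : sstep (Lam _) _ |- _ => inversion Hc end.
      * assert (Hr : ad (App (Lam (Reset (plug G (BVar 0)))) s0)
                        (App (Lam (Reset (plug G (BVar 0)))) s1))
          by (constructor; auto using ad_refl).
        destruct (IHsstep _ Hr) as [(w & Hs & Ha) | (Ha & Hsz)].
        -- inversion Hs; subst.
           ++ inversion Ha.
           ++ match goal with Hc : sstep (Lam _) _ |- _ => inversion Hc end.
           ++ inversion Ha; subst. left. eexists. split.
              ** apply s_resetc. apply sstep_ctx; eauto using pure_ok.
              ** apply ad_r1; eauto.
        -- inversion Ha; subst. right. split.
           ++ apply ad_r1; auto.
           ++ simpl in *; lia.
    +
      match goal with Hc : ad s t1 |- _ => destruct (IHsstep t1 Hc) as [(t1' & Hs & Ha) | (Ha & Hsz)] end.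
      * left. exists t1'. split; auto. apply ad_r2; auto. eapply dl_step; eauto.
      * right. split; [apply ad_r2; auto | simpl; lia].
Qed.

Definition nfshape t := is_value t \/ (exists F b, pure F /\ t = plug F (Shift b)) \/
  (exists E x v, ectx_ok E /\ is_value v /\ t = plug E (App (FVar x) v)).

Lemma progress t : lc t -> sirred t -> nfshape t.
Proof.
  unfold lc, sirred, nfshape; induction t; simpl; intros Hl Hi.
  - lia.
  - left; exact I.
  - left; exact I.
  - destruct Hl as [Hl1 Hl2].
    assert (Hi1 : ~ exists t', sstep t1 t') by (intros [t' Ht]; apply Hi; eexists; apply s_appl; eauto).
    destruct (IHt1 Hl1 Hi1) as [Hv | [(F & b & HF & ->) | (E & x & v & HE & Hv & ->)]].
    + assert (Hi2 : ~ exists t', sstep t2 t') by (intros [t' Ht]; apply Hi; eexists; apply s_appr; eauto).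
      destruct (IHt2 Hl2 Hi2) as [Hv2 | [(F & b & HF & ->) | (E & x & v & HE & Hv' & ->)]].
      * destruct t1; simpl in Hv; try contradiction.
        -- right; right. exists EHole, n, t2; simpl; auto.
        -- exfalso; apply Hi; eexists; apply s_beta; auto.
      * right; left. exists (EArgR t1 F), b; simpl; auto.
      * right; right. exists (EArgR t1 E), x, v; simpl; auto.
    + right; left. exists (EFunL F t2), b; simpl; auto.
    + right; right. exists (EFunL E t2), x, v; simpl; auto.
  - right; left. exists EHole, t; simpl; auto.
  - assert (Hi1 : ~ exists t', sstep t t') by (intros [t' Ht]; apply Hi; eexists; apply s_resetc; eauto).
    destruct (IHt Hl Hi1) as [Hv | [(F & b & HF & ->) | (E & x & v & HE & Hv & ->)]].
    + exfalso; apply Hi; eexists; apply s_reset; auto.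
    + exfalso. destruct (fresh_var (fv_ctx F)) as [y Hy]. apply Hi; eexists; apply (s_shift F b y); auto.
    + right; right. exists (EReset E), x, v; simpl; auto.
Qed.

Lemma nfshape_irred t : nfshape t -> sirred t.
Proof.
  intros [Hv | [(F & b & HF & ->) | (E & x & v & HE & Hv & ->)]] [t' Ht].
  - eapply val_nostep; eauto.
  - eapply shift_nostep; eauto.
  - eapply open_stuck_nostep; eauto.
Qed.

Lemma ctx_decomp E : ectx_ok E -> pure E \/ exists E' F, pure F /\ E = cplug E' (EReset F).
Proof.
  induction E; simpl; intros HE.
  - left; auto.
  - destruct HE as [Hv HE]. destruct (IHE HE) as [Hp | (E' & F & HF & ->)].
    + left; auto.
    + right. exists (EArgR t E'), F; auto.
  - destruct (IHE HE) as [Hp | (E' & F & HF & ->)].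
    + left; auto.
    + right. exists (EFunL E' t), F; auto.
  - destruct (IHE HE) as [Hp | (E' & F & HF & ->)].
    + right. exists EHole, E; auto.
    + right. exists (EReset E'), F; auto.
Qed.

Lemma actx_decomp E0' : forall F0 E1, pure F0 -> actx (cplug E0' (EReset F0)) E1 ->
  exists E1' F1, pure F1 /\ E1 = cplug E1' (EReset F1) /\
    (forall z, dl z -> ad (plug E0' z) (plug E1' z)) /\
    (forall z, ad (Reset (plug F0 z)) (Reset (plug F1 z))).
Proof.
  induction E0'; simpl; intros F0 E1 HF H.
  - inversion H; subst.
    + exists EHole, E2; repeat split; eauto using actx_pure.
      * intros; apply ad_refl.
      * intros; constructor; apply actx_plug; auto using ad_refl.
    + exists EHole, (cplug G E2); repeat split; auto.
      * apply pure_cplug; auto. simpl in HF. destruct HF; eapply actx_pure; eauto.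
      * intros; apply ad_refl.
      * intros z. simpl. rewrite plug_cplug. apply ad_r1; auto.
        apply actx_plug; auto using ad_refl.
    + exfalso. apply actx_pure in H1; auto.
  - inversion H; subst.
    match goal with Hc : actx (cplug E0' (EReset F0)) ?E |- _ => destruct (IHE0' F0 E HF Hc) as (E1' & F1 & HF1 & -> & P1 & P2) end.
    match goal with |- exists _ _, _ /\ EArgR ?v _ = _ /\ _ => exists (EArgR v E1'), F1 end; repeat split; auto.
    intros z Hz; simpl; constructor; auto.
  - inversion H; subst.
    match goal with Hc : actx (cplug E0' (EReset F0)) ?E |- _ => destruct (IHE0' F0 E HF Hc) as (E1' & F1 & HF1 & -> & P1 & P2) end.
    match goal with |- exists _ _, _ /\ EFunL _ ?u = _ /\ _ => exists (EFunL E1' u), F1 end; repeat split; auto.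
    intros z Hz; simpl; constructor; auto.
  - inversion H; subst.
    + match goal with Hc : actx (cplug E0' (EReset F0)) ?E |- _ => destruct (IHE0' F0 E HF Hc) as (E1' & F1 & HF1 & -> & P1 & P2) end.
      exists (EReset E1'), F1; repeat split; auto.
      intros z Hz; simpl; constructor; auto.
    +
      destruct E0'; simpl in H0; try discriminate.
      injection H0; intros; subst.
      assert (Hr : actx (EArgR (Lam (Reset (plug G (BVar 0)))) (cplug E0' (EReset F0)))
                        (EArgR (Lam (Reset (plug G (BVar 0)))) E2))
        by (constructor; auto using ad_refl).
      destruct (IHE0' F0 _ HF Hr) as (E1' & F1 & HF1 & Heq & P1 & P2).
      destruct E1'; simpl in Heq; try discriminate.
      injection Heq; intros; subst.
      exists (EReset (cplug G E1')), F1; repeat split; auto.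
      * simpl. rewrite cplug_assoc. auto.
      * intros z Hz. specialize (P1 z Hz). simpl in P1 |- *. inversion P1; subst.
        rewrite plug_cplug. apply ad_r1; auto.
    +
      match goal with Hc : actx (cplug E0' (EReset F0)) ?E |- _ => destruct (IHE0' F0 E HF Hc) as (E1' & F1 & HF1 & Heq & P1 & P2) end.
      exists E1', F1; repeat split; auto.
      intros z Hz. simpl. apply ad_r2; auto.
      destruct E1'; simpl in Heq |- *; try discriminate; auto.
Qed.

Definition R : rel := fun a b => ad a b /\ lc a.

Lemma fresh2 (l1 l2 : list nat) : exists y, ~ In y l1 /\ ~ In y l2.
Proof.
  destruct (fresh_var (l1 ++ l2)) as [y Hy]. exists y.
  split; intro; apply Hy; apply in_or_app; auto.
Qed.

Lemma value_rel_ad v0 v1 : ad v0 v1 -> is_value v0 -> lc v0 -> value_rel R v0 v1.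
Proof.
  intros H Hv Hl. unfold value_rel. split; auto. split; [eapply value_ad; eauto|].
  destruct (fresh2 (fv v0) (fv v1)) as (y & Hy0 & Hy1).
  exists y; repeat split; auto.
  - destruct v0; simpl in Hv; try contradiction; inversion H; subst; simpl.
    + apply ad_refl.
    + apply ad_open; simpl; auto. constructor.
  - destruct v0; simpl in Hv; try contradiction; inversion H; subst; unfold lc in *; simpl in *.
    + auto.
    + apply lc_open; simpl; auto.
Qed.

Lemma nf_related t0 t1 : ad t0 t1 -> lc t0 -> nfshape t0 -> nf_rel R t0 t1 /\ nfshape t1.
Proof.
  intros H Hl [Hv | [(F & b & HF & ->) | (E & x & v & HE & Hv & ->)]].
  - split.
    + left. apply value_rel_ad; auto.
    + left. eapply value_ad; eauto.
  - destruct (inv_shift F b t1 HF H) as (F1 & b1 & HF1 & -> & Ha & Hb).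
    apply lc_plug_inv in Hl. destruct Hl as [HlF Hlb].
    split.
    + right; left. exists F, F1, b, b1. repeat split; auto.
      * right. split; auto. split; auto.
        destruct (fresh2 (fv_ctx F) (fv_ctx F1)) as (y & Hy0 & Hy1).
        exists y; repeat split; auto.
        -- apply actx_plug; auto. constructor.
        -- unfold lc; apply lc_plug; simpl; auto.
      * destruct (fresh2 (fv b) (fv b1)) as (y & Hy0 & Hy1).
        exists y; repeat split; auto.
        -- constructor. apply ad_open; simpl; auto. constructor.
        -- unfold lc in *; simpl in *. apply lc_open; simpl; auto.
    + right; left. exists F1, b1; auto.
  - destruct (inv_open E x v t1 HE H) as (E1 & v1 & -> & Ha & Hb).
    apply lc_plug_inv in Hl. destruct Hl as [HlE Hlv].
    split.
    + right; right. exists E, E1, x, v, v1.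
      split; [auto|]. split; [eapply actx_ok; eauto|]. split; [auto|]. split; [auto|]. split.
      * destruct (ctx_decomp E HE) as [Hp | (E0' & F0 & HF0 & ->)].
        -- right. split; auto. split; [eapply actx_pure; eauto|].
           destruct (fresh2 (fv_ctx E) (fv_ctx E1)) as (y & Hy0 & Hy1).
           exists y; repeat split; auto.
           ++ apply actx_plug; auto. constructor.
           ++ unfold lc; apply lc_plug; simpl; auto.
        -- destruct (actx_decomp E0' F0 E1 HF0 Ha) as (E1' & F1 & HF1 & -> & P1 & P2).
           left. exists E0', F0, E1', F1. repeat split; auto.
           destruct (fresh2 (fv_ctx (cplug E0' (EReset F0))) (fv_ctx (cplug E1' (EReset F1))))
             as (y & Hy0 & Hy1).
           apply lc_ctx_cplug in HlE. destruct HlE as [Hl1 Hl2].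
           exists y; repeat split; auto.
           ++ apply P1. simpl; auto.
           ++ unfold lc; apply lc_plug; simpl; auto.
           ++ unfold lc; simpl; apply lc_plug; simpl; auto.
      * apply value_rel_ad; auto. unfold lc in *; simpl in Hlv; tauto.
    + right; right. exists E1, x, v1. repeat split; auto.
      * eapply actx_ok; eauto.
      * eapply value_ad; eauto.
Qed.

Lemma R_step t0 t0' t1 : R t0 t1 -> sstep t0 t0' ->
  (exists t1', sstep t1 t1' /\ R t0' t1') \/ (R t0' t1 /\ size t0' < size t0).
Proof.
  intros [Ha Hl] Hs. assert (Hl' : lc t0') by (eapply lc_sstep; eauto).
  destruct (sim_step t0 t0' Hs t1 Ha) as [(t1' & H1 & H2) | (H1 & H2)].
  - left; exists t1'; split; [|split]; auto.
  - right; split; [split|]; auto.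
Qed.

Lemma R_nf t0 t1 : R t0 t1 -> sirred t0 -> nf_rel R t0 t1 /\ sirred t1.
Proof.
  intros [Ha Hl] Hi. pose proof (progress t0 Hl Hi) as Hn.
  destruct (nf_related t0 t1 Ha Hl Hn) as [H1 H2]. split; auto. apply nfshape_irred; auto.
Qed.

Lemma stutter_to_irred n : forall t0 t1, size t0 < n -> R t0 t1 -> sirred t1 ->
  exists t0', sstar t0 t0' /\ sirred t0' /\ R t0' t1.
Proof.
  induction n; intros t0 t1 Hs HR Hi; [lia|].
  destruct (classic (exists t', sstep t0 t')) as [[t' Ht] | Hn].
  - destruct (R_step t0 t' t1 HR Ht) as [(t1' & H1 & H2) | (H1 & H2)].
    + exfalso; apply Hi; eauto.
    + destruct (IHn t' t1) as (t0' & S1 & S2 & S3); auto; try lia.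
      exists t0'; split; auto. econstructor; eauto.
  - exists t0; split; [constructor|]; auto.
Qed.

Lemma match_step n : forall t0 t1 t1', size t0 < n -> R t0 t1 -> sstep t1 t1' ->
  exists t0', sstar t0 t0' /\ R t0' t1'.
Proof.
  induction n; intros t0 t1 t1' Hs HR Hst; [lia|].
  destruct (classic (exists t', sstep t0 t')) as [[t' Ht] | Hn].
  - destruct (R_step t0 t' t1 HR Ht) as [(t1x & H1 & H2) | (H1 & H2)].
    + rewrite (sstep_det _ _ H1 _ Hst) in H2.
      exists t'; split; auto. econstructor; eauto. constructor.
    + destruct (IHn t' t1 t1') as (t0' & S1 & S2); auto; try lia.
      exists t0'; split; auto. econstructor; eauto.
  - destruct (R_nf t0 t1 HR Hn) as [_ Hi]. exfalso; apply Hi; eauto.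
Qed.

Lemma sim1 t0 t0' : sstar t0 t0' -> sirred t0' -> forall t1, R t0 t1 ->
  exists t1', sstar t1 t1' /\ sirred t1' /\ nf_rel R t0' t1'.
Proof.
  intros H; induction H; intros Hi t1 HR.
  - destruct (R_nf t t1 HR Hi) as [H1 H2]. exists t1; repeat split; auto. constructor.
  - destruct (R_step t t' t1 HR H) as [(t1x & H1 & H2) | (H1 & H2)].
    + destruct (IHsstar Hi t1x H2) as (t1' & S1 & S2 & S3).
      exists t1'; repeat split; auto. econstructor; eauto.
    + apply IHsstar; auto.
Qed.

Lemma sim2 t1 t1' : sstar t1 t1' -> sirred t1' -> forall t0, R t0 t1 ->
  exists t0', sstar t0 t0' /\ sirred t0' /\ nf_rel R t0' t1'.
Proof.
  intros H; induction H; intros Hi t0 HR.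
  - destruct (stutter_to_irred (S (size t0)) t0 t ltac:(lia) HR) as (t0' & S1 & S2 & S3); auto.
    destruct (R_nf t0' t S3 S2) as [H1 H2]. exists t0'; auto.
  - destruct (match_step (S (size t0)) t0 t t' ltac:(lia) HR H) as (t0x & S1 & S2).
    destruct (IHsstar Hi t0x S2) as (t0' & T1 & T2 & T3).
    exists t0'; repeat split; auto. eapply sstar_trans; eauto.
Qed.

Lemma value_rel_flip (Q : rel) a b : value_rel Q a b -> value_rel (fun x y => Q y x) b a.
Proof.
  intros (H1 & H2 & y & H3 & H4 & H5). split; auto. split; auto. exists y; auto.
Qed.

Lemma ctx_rel_flip (Q : rel) a b : ctx_rel Q a b -> ctx_rel (fun x y => Q y x) b a.
Proof.
  intros [(E0' & F0 & E1' & F1 & H1 & H2 & H3 & H4 & y & H5 & H6 & H7 & H8) |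
          (H1 & H2 & y & H3 & H4 & H5)].
  - left. exists E1', F1, E0', F0. repeat split; auto. exists y; auto.
  - right. split; auto. split; auto. exists y; auto.
Qed.

Lemma nf_rel_flip (Q : rel) a b : nf_rel Q a b -> nf_rel (fun x y => Q y x) b a.
Proof.
  intros [H | [(F0 & F1 & b0 & b1 & H1 & H2 & H3 & H4 & H5 & k & H6 & H7 & H8) |
               (E0 & E1 & x & v0 & v1 & H1 & H2 & H3 & H4 & H5 & H6)]].
  - left. apply value_rel_flip; auto.
  - right; left. exists F1, F0, b1, b0. repeat split; auto.
    + apply ctx_rel_flip; auto.
    + exists k; auto.
  - right; right. exists E1, E0, x, v1, v0.
    split; [auto|]. split; [auto|]. split; [auto|]. split; [auto|]. split.
    + apply ctx_rel_flip; auto.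
    + apply value_rel_flip; auto.
Qed.

Theorem proposition5 :
  forall (F : ectx) (t : term) (x : nat),
    pure F -> lc_ctx F -> lc t -> ~ In x (fv_ctx F) ->
    nf_bisim (Reset (App (Lam (close x (Reset (plug F (FVar x))))) t))
             (Reset (plug F t)).
Proof.
  intros F t x HF HlF Hlt Hx.
  exists R. split; [split|].
  - intros t0 t1 t0' HR [Hs Hi].
    apply star_sstar in Hs. apply irred_sirred in Hi.
    destruct (sim1 t0 t0' Hs Hi t1 HR) as (t1' & S1 & S2 & S3).
    exists t1'. split; auto. split.
    + apply star_sstar; auto.
    + apply irred_sirred; auto.
  - intros t1 t0 t1' HR [Hs Hi].
    apply star_sstar in Hs. apply irred_sirred in Hi.
    destruct (sim2 t1 t1' Hs Hi t0 HR) as (t0' & S1 & S2 & S3).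
    exists t0'. split; [split|].
    + apply star_sstar; auto.
    + apply irred_sirred; auto.
    + apply nf_rel_flip; auto.
  - rewrite close_cont; auto. split.
    + apply ad_r1; auto. apply ad_refl.
    + unfold lc; simpl. split.
      * apply lc_plug; simpl; auto.
      * exact Hlt.
Qed.
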